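(* Let $\mathcal{L}$ be a lineage with hierarchical generator $\mathcal{H}$. Then (i) for every $\psi\in\mathcal{L}$, $\psi\in\operatorname{span}(\mathcal{H}\cap\mathrm{desc}(\psi))$, where $\mathrm{desc}(\psi)=\bigcup_{k\ge1}\mathrm{ch}^k(\psi)$; (ii) for every $\ell\in\mathbb{Z}_{\ge0}$ and $k\in\mathbb{Z}^+$, $\mathcal{H}^{\ell+k}\subset\mathrm{ch}^k(\mathcal{L}^\ell)$.
   Context: Fix integers $d\ge1$, $n\ge2$, $m\ge2$; $s=n-1$, $p=m-1$. B-splines $\varphi^\ell_{\vec i}(\vec x)=\prod_kQ(n^\ell x_k-i_k)$ on $\mathbb{R}^d$ for $\ell\in\mathbb{Z}_{\ge0}$, $\vec i\in\mathbb{Z}^d$, $Q$ the uniform B-spline of order $m$ with knots $0,\dots,m$; $\mathfrak{B}$ the set of all of them, $\ell_\varphi$ the level. $\mathcal{B}^0=\{\varphi^0_{\vec i}:\vec i\in[-p:0]^d\}$. Children $\mathrm{ch}(\varphi^\ell_{\vec i})=\{\varphi^{\ell+1}_{\vec k}:n\vec i\le\vec k\le n\vec i+sm\}$ (componentwise), extended to sets by union, $\mathrm{ch}^k$ its $k$-fold application; each $\varphi^\ell_{\vec i}$ is a linear combination with positive coefficients of its children. A lineage is a finite $\mathcal{L}\subset\mathfrak{B}$ with $\mathcal{L}\subset\mathcal{B}^0\cup\mathrm{ch}(\mathcal{L})$; its hierarchical generator is $\mathcal{H}=(\mathcal{B}^0\cup\mathrm{ch}(\mathcal{L}))\setminus\mathcal{L}$.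 For a set $\mathcal{F}\subset\mathfrak{B}$, $\mathcal{F}^\ell$ denotes its elements of level $\ell$. *)

(* Defs.v *)
From Stdlib Require Import Reals ZArith List.
Open Scope R_scope.

(* Uniform B-spline of order k with knots 0,1,...,k (Cox--de Boor recursion):
   N_1 = indicator of [0,1),
   N_k(x) = (x N_{k-1}(x) + (k - x) N_{k-1}(x-1)) / (k-1). *)
Fixpoint Qspl (k : nat) (x : R) : R :=
  match k with
  | O => 0
  | S O => if Rle_dec 0 x then (if Rlt_dec x 1 then 1 else 0) else 0
  | S (S _ as k1) => (x * Qspl k1 x + (INR k1 + 1 - x) * Qspl k1 (x - 1)) / INR k1
  end.

(* A B-spline phi^l_i is identified by its level l and multi-index i in Z^d
   (a list of length d). Distinct (l,i) give distinct functions. *)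
Record bspl := mkB { lev : nat; pos : list Z }.

Fixpoint prodR (d : nat) (f : nat -> R) : R :=
  match d with O => 1 | S d' => prodR d' f * f d' end.

(* points of R^d are represented by functions nat -> R (coordinates < d used) *)
Definition phi (n m d : nat) (b : bspl) (x : nat -> R) : R :=
  prodR d (fun k => Qspl m (INR n ^ lev b * x k - IZR (nth k (pos b) 0%Z))).

Definition wf (d : nat) (b : bspl) : Prop := length (pos b) = d.

Definition B0 (m d : nat) (b : bspl) : Prop :=
  wf d b /\ lev b = 0%nat /\
  forall k, (k < d)%nat -> (- Z.of_nat (m - 1) <= nth k (pos b) 0 <= 0)%Z.

Definition child (n m d : nat) (b b' : bspl) : Prop :=
  wf d b' /\ lev b' = S (lev b) /\
  forall k, (k < d)%nat ->
    (Z.of_nat n * nth k (pos b) 0 <= nth k (pos b') 0 <=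
     Z.of_nat n * nth k (pos b) 0 + Z.of_nat ((n - 1) * m))%Z.

Definition chS (n m d : nat) (S : bspl -> Prop) (b' : bspl) : Prop :=
  exists b, S b /\ child n m d b b'.

Fixpoint chk (n m d : nat) (k : nat) (S : bspl -> Prop) : bspl -> Prop :=
  match k with
  | O => S
  | S k' => chS n m d (chk n m d k' S)
  end.

Definition finite_set (S : bspl -> Prop) : Prop :=
  exists l : list bspl, forall b, S b <-> In b l.

Definition lineage (n m d : nat) (L : bspl -> Prop) : Prop :=
  finite_set L /\ (forall b, L b -> wf d b) /\
  (forall b, L b -> B0 m d b \/ chS n m d L b).

Definition hgen (n m d : nat) (L : bspl -> Prop) (b : bspl) : Prop :=
  (B0 m d b \/ chS n m d L b) /\ ~ L b.

Definition desc (n m d : nat) (psi : bspl) (b : bspl) : Prop :=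
  exists k, (1 <= k)%nat /\ chk n m d k (fun c => c = psi) b.

Definition atLevel (F : bspl -> Prop) (l : nat) (b : bspl) : Prop :=
  F b /\ lev b = l.

Definition lincomb (n m d : nat) (cs : list (R * bspl)) (x : nat -> R) : R :=
  fold_right (fun cb acc => fst cb * phi n m d (snd cb) x + acc) 0 cs.

Definition in_span (n m d : nat) (S : bspl -> Prop) (psi : bspl) : Prop :=
  exists cs : list (R * bspl),
    (forall cb, In cb cs -> S (snd cb)) /\
    forall x : nat -> R, phi n m d psi x = lincomb n m d cs x.

(* Main.v *)
Require Import Defs.
From Stdlib Require Import Reals ZArith List Lia Lra FunctionalExtensionality Classical.
Open Scope R_scope.

Fixpoint sumL {A : Type} (w : A -> R) (l : list A) : R :=
  match l with nil => 0 | a :: l' => w a + sumL w l' end.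

Lemma sumL_app {A : Type} (w : A -> R) l1 l2 : sumL w (l1 ++ l2) = sumL w l1 + sumL w l2.
Proof. induction l1; cbn [sumL app]; [ring | rewrite IHl1; ring]. Qed.

Lemma sumL_map {A B : Type} (w : B -> R) (f : A -> B) l :
  sumL w (map f l) = sumL (fun a => w (f a)) l.
Proof. induction l; cbn [sumL map]; [ring | rewrite IHl; ring]. Qed.

Lemma sumL_flat_map {A B : Type} (w : B -> R) (f : A -> list B) l :
  sumL w (flat_map f l) = sumL (fun a => sumL w (f a)) l.
Proof. induction l; cbn [sumL flat_map]; [ring | rewrite sumL_app, IHl; ring]. Qed.

Lemma sumL_ext {A : Type} (w1 w2 : A -> R) l :
  (forall a, In a l -> w1 a = w2 a) -> sumL w1 l = sumL w2 l.
Proof.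
  induction l; intro H; cbn [sumL]; [ring|].
  rewrite H by (left; reflexivity). rewrite IHl by (intros; apply H; right; auto). ring.
Qed.

Lemma sumL_mulr {A : Type} (w : A -> R) l c : sumL w l * c = sumL (fun a => w a * c) l.
Proof. induction l; cbn [sumL]; [ring | rewrite <- IHl; ring]. Qed.

Lemma sumL_mull {A : Type} (w : A -> R) l c : c * sumL w l = sumL (fun a => c * w a) l.
Proof. induction l; cbn [sumL]; [ring | rewrite <- IHl; ring]. Qed.

Fixpoint sumR (N : nat) (g : nat -> R) : R :=
  match N with O => 0 | S N' => sumR N' g + g N' end.

Lemma sumR_ext N f g : (forall i, f i = g i) -> sumR N f = sumR N g.
Proof. intro H; induction N; cbn [sumR]; [ring| rewrite IHN, H; ring]. Qed.

Lemma sumR_minus N f g : sumR N (fun i => f i - g i) = sumR N f - sumR N g.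
Proof. induction N; cbn [sumR]; [ring| rewrite IHN; ring]. Qed.

Lemma sumR_scal N f c : sumR N (fun i => c * f i) = c * sumR N f.
Proof. induction N; cbn [sumR]; [ring| rewrite IHN; ring]. Qed.

Definition tp (k : nat) (x : R) : R := if Rle_dec 0 x then x ^ k else 0.
Definition Dop (f : R -> R) : R -> R := fun x => f x - f (x - 1).
Fixpoint iterD (k : nat) (f : R -> R) : R -> R :=
  match k with O => f | S k' => Dop (iterD k' f) end.

Lemma iterD_M j g x : iterD (S j) (fun y => y * g y) x =
  x * iterD (S j) g x + INR (S j) * iterD j g (x - 1).
Proof.
  revert x; induction j; intro x.
  - cbn [iterD]. unfold Dop. simpl INR. ring.
  - change (iterD (S (S j)) (fun y => y * g y) x) with
      (iterD (S j) (fun y => y*g y) x - iterD (S j) (fun y => y * g y) (x - 1)).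
    rewrite !IHj.
    change (iterD (S (S j)) g x) with (iterD (S j) g x - iterD (S j) g (x-1)).
    assert (E: iterD (S j) g (x-1) = iterD j g (x-1) - iterD j g (x-1-1)) by reflexivity.
    rewrite E. rewrite (S_INR (S j)). ring.
Qed.

Lemma tp_S k : tp (S k) = fun y => y * tp k y.
Proof. extensionality y. unfold tp. destruct (Rle_dec 0 y); simpl; ring. Qed.

Lemma Qspl_SS k x : Qspl (S (S k)) x =
  (x * Qspl (S k) x + (INR (S k) + 1 - x) * Qspl (S k) (x - 1)) / INR (S k).
Proof. reflexivity. Qed.

Lemma QT k x : Qspl (S k) x = iterD (S k) (tp k) x / INR (fact k).
Proof.
  revert x; induction k; intro x.
  - simpl. unfold Dop, tp.
    destruct (Rle_dec 0 x); destruct (Rle_dec 0 (x-1)); try destruct (Rlt_dec x 1);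
      simpl; lra.
  - rewrite Qspl_SS, !IHk. rewrite tp_S, iterD_M.
    change (iterD (S (S k)) (tp k) x) with (iterD (S k) (tp k) x - iterD (S k) (tp k) (x-1)).
    change (fact (S k)) with (S k * fact k)%nat. rewrite mult_INR.
    rewrite (S_INR (S k)).
    assert (INR (S k) <> 0) by (apply not_0_INR; lia).
    assert (INR (fact k) <> 0) by apply INR_fact_neq_0.
    field; auto.
Qed.
Definition Dh (h : R) (f : R -> R) : R -> R := fun x => f x - f (x - h).
Fixpoint iterDh (h : R) (k : nat) (f : R -> R) : R -> R :=
  match k with O => f | S k' => Dh h (iterDh h k' f) end.
Definition Sn (n : nat) (h : R) (f : R -> R) : R -> R :=
  fun x => sumR n (fun i => f (x - INR i * h)).
Fixpoint iterSn (n : nat) (h : R) (k : nat) (f : R -> R) : R -> R :=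
  match k with O => f | S k' => Sn n h (iterSn n h k' f) end.

Lemma tele N h f x :
  sumR N (fun i => f (x - INR i * h) - f (x - INR i * h - h)) = f x - f (x - INR N * h).
Proof.
  induction N; cbn [sumR].
  - replace (x - INR 0 * h) with x by (simpl; ring). ring.
  - rewrite IHN. replace (x - INR (S N) * h) with (x - INR N * h - h) by (rewrite S_INR; ring).
    ring.
Qed.

Lemma D_Sn_Dh n h f x : INR n * h = 1 -> Dop f x = Sn n h (Dh h f) x.
Proof. intro H. unfold Dop, Sn, Dh. rewrite tele, H. reflexivity. Qed.

Lemma Dh_Sn n h f x : Dh h (Sn n h f) x = Sn n h (Dh h f) x.
Proof.
  unfold Dh, Sn. rewrite <- sumR_minus. apply sumR_ext; intro i.
  replace (x - h - INR i * h) with (x - INR i * h - h) by ring. reflexivity.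
Qed.

Lemma Dh_iterSn n h k F : Dh h (iterSn n h k F) = iterSn n h k (Dh h F).
Proof.
  induction k; cbn [iterSn]; [reflexivity|].
  rewrite <- IHk. extensionality x. apply Dh_Sn.
Qed.

Lemma iterD_split n h : INR n * h = 1 -> forall k f, iterD k f = iterSn n h k (iterDh h k f).
Proof.
  intros Hnh k; induction k; intro f; [reflexivity|].
  cbn [iterD iterSn iterDh]. rewrite IHk. extensionality x.
  rewrite (D_Sn_Dh n h) by assumption. rewrite Dh_iterSn. reflexivity.
Qed.

Lemma iterDh_scale nr h : nr * h = 1 -> forall k F,
  iterDh h k (fun y => F (nr * y)) = fun x => iterD k F (nr * x).
Proof.
  intros Hnh k; induction k; intro F; [reflexivity|].
  cbn [iterDh iterD]. rewrite IHk. unfold Dh, Dop. extensionality x.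
  replace (nr * (x - h)) with (nr * x - 1); [reflexivity|]. rewrite <- Hnh; ring.
Qed.

Lemma iterDh_lin h k F c : iterDh h k (fun y => c * F y) = fun x => c * iterDh h k F x.
Proof.
  induction k; [reflexivity|]. cbn [iterDh]. rewrite IHk. unfold Dh. extensionality x. ring.
Qed.

Lemma iterSn_lin n h k F c : iterSn n h k (fun y => c * F y) = fun x => c * iterSn n h k F x.
Proof.
  induction k; [reflexivity|]. cbn [iterSn]. rewrite IHk. unfold Sn. extensionality x.
  apply sumR_scal.
Qed.

Lemma tp_scale nr k y : 0 < nr -> tp k (nr * y) = nr ^ k * tp k y.
Proof.
  intro H. unfold tp. destruct (Rle_dec 0 (nr*y)), (Rle_dec 0 y).
  - apply Rpow_mult_distr.
  - exfalso; nra.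
  - exfalso; nra.
  - ring.
Qed.

Lemma Q_refine_fun n k : (1 <= n)%nat -> forall x,
  Qspl (S k) x = / INR n ^ k * iterSn n (/ INR n) (S k) (fun y => Qspl (S k) (INR n * y)) x.
Proof.
  intros Hn x.
  assert (Hpos : 0 < INR n) by (apply lt_0_INR; lia).
  assert (Hnh : INR n * / INR n = 1) by (field; lra).
  assert (Hpk : INR n ^ k <> 0) by (apply pow_nonzero; lra).
  rewrite QT. rewrite (iterD_split n (/ INR n) Hnh).
  assert (Htp : tp k = fun y => / INR n ^ k * tp k (INR n * y)).
  { extensionality y. rewrite tp_scale by assumption. field; auto. }
  rewrite Htp. rewrite iterDh_lin. rewrite (iterDh_scale (INR n) (/ INR n) Hnh).
  assert (Hf : (fun x0 => / INR n ^ k * iterD (S k) (tp k) (INR n * x0)) =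
               (fun x0 => (/ INR n ^ k * INR (fact k)) * Qspl (S k) (INR n * x0))).
  { extensionality y. rewrite QT. field. split; auto. apply INR_fact_neq_0. }
  rewrite Hf. rewrite iterSn_lin. field. split; auto. apply INR_fact_neq_0.
Qed.

Definition lc (g : R -> R) (h : R) (cs : list (R * nat)) (x : R) : R :=
  sumL (fun p => fst p * g (x - INR (snd p) * h)) cs.
Definition IsComb (g : R -> R) (h : R) (J : nat) (F : R -> R) : Prop :=
  exists cs, (forall p, In p cs -> (snd p <= J)%nat) /\ forall x, F x = lc g h cs x.

Lemma comb_id g h : IsComb g h 0 g.
Proof.
  exists ((1, 0%nat) :: nil). split.
  - intros p [<-|[]]; simpl; lia.
  - intro x. unfold lc; cbn [sumL fst snd]. replace (x - INR 0 * h) with x by (simpl; ring). ring.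
Qed.

Lemma comb_zero g h J : IsComb g h J (fun _ => 0).
Proof. exists nil. split; [intros p []| intro; reflexivity]. Qed.

Lemma comb_weak g h J J' F : (J <= J')%nat -> IsComb g h J F -> IsComb g h J' F.
Proof. intros HJ [cs [H1 H2]]. exists cs. split; auto. intros p Hp; specialize (H1 p Hp); lia. Qed.

Lemma comb_add g h J F1 F2 : IsComb g h J F1 -> IsComb g h J F2 ->
  IsComb g h J (fun x => F1 x + F2 x).
Proof.
  intros [c1 [H1 E1]] [c2 [H2 E2]]. exists (c1 ++ c2). split.
  - intros p Hp. apply in_app_or in Hp as [Hp|Hp]; auto.
  - intro x. unfold lc. rewrite sumL_app, E1, E2. reflexivity.
Qed.

Lemma comb_shift g h J F i : IsComb g h J F -> IsComb g h (J + i) (fun x => F (x - INR i * h)).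
Proof.
  intros [cs [H1 E1]]. exists (map (fun p => (fst p, (snd p + i)%nat)) cs). split.
  - intros p Hp. apply in_map_iff in Hp as [q [<- Hq]]. simpl. specialize (H1 q Hq). lia.
  - intro x. rewrite E1. unfold lc. rewrite sumL_map. apply sumL_ext. intros p _. cbn [fst snd].
    rewrite plus_INR. replace (x - INR i * h - INR (snd p) * h) with
      (x - (INR (snd p) + INR i) * h) by ring. reflexivity.
Qed.

Lemma comb_Sn g h n J F : IsComb g h J F -> IsComb g h (J + (n-1)) (Sn n h F).
Proof.
  intro HF.
  assert (A : forall N, (N <= n)%nat ->
    IsComb g h (J + (n-1)) (fun x => sumR N (fun i => F (x - INR i * h)))).
  { induction N; intro HN.
    - exact (comb_zero g h _).
    - cbn [sumR]. apply comb_add.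
      + apply IHN; lia.
      + apply comb_weak with (J + N)%nat; [lia|]. apply comb_shift; auto. }
  unfold Sn. apply A. lia.
Qed.

Lemma comb_iter g h n k : IsComb g h (k * (n-1)) (iterSn n h k g).
Proof.
  induction k.
  - apply comb_id.
  - cbn [iterSn]. apply comb_weak with (k * (n-1) + (n-1))%nat; [lia|]. apply comb_Sn; auto.
Qed.

Lemma Q1D n m : (1 <= n)%nat -> (1 <= m)%nat ->
  exists cs : list (R * nat), (forall p, In p cs -> (snd p <= (n-1)*m)%nat) /\
  forall t, Qspl m t = sumL (fun p => fst p * Qspl m (INR n * t - INR (snd p))) cs.
Proof.
  intros Hn Hm. destruct m as [|k]; [lia|].
  destruct (comb_iter (fun y => Qspl (S k) (INR n * y)) (/ INR n) n (S k)) as [cs [Hb Hx]].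
  exists (map (fun p => (/ INR n ^ k * fst p, snd p)) cs). split.
  - intros p Hp. apply in_map_iff in Hp as [q [<- Hq]]. simpl. specialize (Hb q Hq). nia.
  - intro t. rewrite (Q_refine_fun n k Hn). rewrite Hx. unfold lc. rewrite sumL_map, sumL_mull.
    apply sumL_ext; intros p _. cbn [fst snd].
    assert (0 < INR n) by (apply lt_0_INR; lia).
    replace (INR n * (t - INR (snd p) * / INR n)) with (INR n * t - INR (snd p)) by (field; lra).
    ring.
Qed.

Lemma prodR_ext d f g : (forall k, (k < d)%nat -> f k = g k) -> prodR d f = prodR d g.
Proof.
  induction d; intro H; cbn [prodR]; [reflexivity|].
  rewrite IHd by (intros; apply H; lia). rewrite H by lia. reflexivity.
Qed.

Lemma multi n m (b : bspl) : (1 <= n)%nat -> (1 <= m)%nat -> forall d',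
  exists vs : list (R * list Z),
    (forall p, In p vs -> length (snd p) = d' /\ forall k, (k < d')%nat ->
       (Z.of_nat n * nth k (Defs.pos b) 0 <= nth k (snd p) 0 <=
        Z.of_nat n * nth k (Defs.pos b) 0 + Z.of_nat ((n - 1) * m))%Z) /\
    forall x : nat -> R,
      prodR d' (fun k => Qspl m (INR n ^ lev b * x k - IZR (nth k (Defs.pos b) 0%Z))) =
      sumL (fun p => fst p * prodR d' (fun k =>
              Qspl m (INR n ^ S (lev b) * x k - IZR (nth k (snd p) 0%Z)))) vs.
Proof.
  intros Hn Hm d'. induction d' as [|d' IH].
  - exists ((1, nil) :: nil). split.
    + intros p [<-|[]]. split; [reflexivity| intros; lia].
    + intros x. simpl. ring.
  - destruct IH as [vs [Hv Hx]]. destruct (Q1D n m Hn Hm) as [cs [Hc Hq]].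
    set (i := nth d' (Defs.pos b) 0%Z).
    exists (flat_map (fun p => map (fun q => (fst p * fst q,
        snd p ++ ((Z.of_nat n * i + Z.of_nat (snd q))%Z :: nil))) cs) vs).
    split.
    + intros p Hp. apply in_flat_map in Hp as [p0 [Hp0 Hq0]].
      apply in_map_iff in Hq0 as [q [<- Hq0]]. cbn [fst snd].
      destruct (Hv p0 Hp0) as [Hl Hb]. split.
      * rewrite length_app, Hl. simpl. lia.
      * intros k Hk. destruct (Nat.lt_ge_cases k d') as [Hk'|Hk'].
        -- rewrite app_nth1 by lia. apply Hb; lia.
        -- assert (k = d') by lia. subst k.
           rewrite app_nth2 by lia. rewrite Hl, Nat.sub_diag. simpl.
           specialize (Hc q Hq0). set (M := ((n-1)*m)%nat) in *. unfold i. lia.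
    + intro x. cbn [prodR]. rewrite Hx. fold i. rewrite (Hq (INR n ^ lev b * x d' - IZR i)).
      rewrite sumL_flat_map, sumL_mulr. apply sumL_ext. intros p Hp.
      destruct (Hv p Hp) as [Hl _].
      rewrite sumL_map, sumL_mull. apply sumL_ext; intros q _. cbn [fst snd].
      rewrite (prodR_ext d' (fun k => Qspl m (INR n ^ S (lev b) * x k -
                IZR (nth k (snd p ++ (Z.of_nat n * i + Z.of_nat (snd q))%Z :: nil) 0%Z)))
               (fun k => Qspl m (INR n ^ S (lev b) * x k - IZR (nth k (snd p) 0%Z)))).
      2:{ intros k Hk. rewrite app_nth1 by lia. reflexivity. }
      rewrite app_nth2 by lia. rewrite Hl, Nat.sub_diag. cbn [nth].
      replace (INR n ^ S (lev b) * x d' - IZR (Z.of_nat n * i + Z.of_nat (snd q)))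
        with (INR n * (INR n ^ lev b * x d' - IZR i) - INR (snd q)).
      * ring.
      * rewrite plus_IZR, mult_IZR, <- !INR_IZR_INZ. cbn [pow]. ring.
Qed.

Lemma lincomb_sumL n m d cs x :
  lincomb n m d cs x = sumL (fun cb => fst cb * phi n m d (snd cb) x) cs.
Proof. induction cs; simpl; [reflexivity| rewrite <- IHcs; reflexivity]. Qed.

Lemma refine n m d (b : bspl) : (1 <= n)%nat -> (1 <= m)%nat ->
  exists cs : list (R * bspl), (forall cb, In cb cs -> child n m d b (snd cb)) /\
  forall x, phi n m d b x = lincomb n m d cs x.
Proof.
  intros Hn Hm. destruct (multi n m b Hn Hm d) as [vs [Hv Hx]].
  exists (map (fun p => (fst p, mkB (S (lev b)) (snd p))) vs). split.
  - intros cb Hcb. apply in_map_iff in Hcb as [p [<- Hp]].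
    destruct (Hv p Hp) as [Hl Hb]. unfold child, wf. cbn [snd lev Defs.pos].
    split; [exact Hl| split; [reflexivity| exact Hb]].
  - intro x. rewrite lincomb_sumL, sumL_map. unfold phi at 1. rewrite Hx.
    apply sumL_ext; intros p _. reflexivity.
Qed.

Lemma span_gather n m d (S : bspl -> Prop) cs :
  (forall cb, In cb cs -> S (snd cb) \/ exists ds, (forall db, In db ds -> S (snd db)) /\
      forall x, phi n m d (snd cb) x = lincomb n m d ds x) ->
  exists es, (forall eb, In eb es -> S (snd eb)) /\
     forall x, lincomb n m d cs x = lincomb n m d es x.
Proof.
  induction cs as [|a cs IH]; intro H.
  - exists nil. split; [intros _ []| reflexivity].
  - destruct IH as [es [Hes Hex]]. { intros cb Hcb. apply H. right. exact Hcb. }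
    destruct (H a (or_introl eq_refl)) as [Ha | [ds [Hds Hdx]]].
    + exists (a :: es). split.
      * intros eb [<-|Heb]; auto.
      * intro x. specialize (Hex x). rewrite !lincomb_sumL in *. cbn [sumL]. rewrite Hex. reflexivity.
    + exists (map (fun db => (fst a * fst db, snd db)) ds ++ es). split.
      * intros eb Heb. apply in_app_or in Heb as [Heb|Heb]; auto.
        apply in_map_iff in Heb as [db [<- Hdb]]. exact (Hds db Hdb).
      * intro x. specialize (Hex x). specialize (Hdx x). rewrite !lincomb_sumL in *. cbn [sumL]. rewrite Hex, Hdx.
        rewrite sumL_app, sumL_map, sumL_mull. f_equal.
        apply sumL_ext; intros; cbn [fst snd]; ring.
Qed.

Lemma chk_shift n m d psi c : child n m d psi c -> forall k b,
  chk n m d k (fun x => x = c) b -> chk n m d (S k) (fun x => x = psi) b.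
Proof.
  intros Hc k. induction k; intros b Hb.
  - cbn [chk] in *. subst b. exists psi. split; auto.
  - cbn [chk] in *. destruct Hb as [b0 [H1 H2]]. exists b0. split; auto.
Qed.

Fixpoint maxlev (l : list bspl) : nat :=
  match l with nil => 0%nat | b :: l' => Nat.max (lev b) (maxlev l') end.

Lemma maxlev_ge l b : In b l -> (lev b <= maxlev l)%nat.
Proof. induction l; simpl; intros H; [contradiction|]. destruct H as [H|H]; [subst; lia| specialize (IHl H); lia]. Qed.

Lemma B0_lev m d b : B0 m d b -> lev b = 0%nat.
Proof. intros [_ [H _]]. exact H. Qed.

Theorem lemma4p5 (d n m : nat) (Hd : (1 <= d)%nat) (Hn : (2 <= n)%nat)
  (Hm : (2 <= m)%nat) (L : bspl -> Prop) (HL : lineage n m d L) :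
  (forall psi, L psi ->
     in_span n m d (fun b => hgen n m d L b /\ desc n m d psi b) psi) /\
  (forall (l k : nat), (1 <= k)%nat ->
     forall b, atLevel (hgen n m d L) (l + k) b ->
       chk n m d k (atLevel L l) b).
Proof.
  destruct HL as [[lst Hlst] [Hwf Hsub]].
  split.
  - set (M := maxlev lst).
    assert (HM : forall b, L b -> (lev b <= M)%nat).
    { intros b Hb. apply maxlev_ge, Hlst, Hb. }
    assert (Main : forall j psi, L psi -> (M - lev psi <= j)%nat ->
              in_span n m d (fun b => hgen n m d L b /\ desc n m d psi b) psi).
    { induction j; intros psi Hpsi Hj;
      destruct (refine n m d psi ltac:(lia) ltac:(lia)) as [cs [Hch Hphi]];
      destruct (span_gather n m d (fun b => hgen n m d L b /\ desc n m d psi b) cs)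
        as [es [Hes Hex]];
      try (exists es; split; [exact Hes| intro x; rewrite Hphi; apply Hex]);
      intros cb Hcb; specialize (Hch cb Hcb);
      (destruct (classic (L (snd cb))) as [HLc|HLc];
       [| left; split;
          [ split; [right; exists psi; split; auto | exact HLc]
          | exists 1%nat; split; [lia|]; cbn [chk]; exists psi; split; auto]]).
      - exfalso. destruct Hch as [_ [Hl _]]. specialize (HM _ HLc). lia.
      - right. destruct Hch as [Hw [Hl Hbd]] eqn:Hchild.
        destruct (IHj (snd cb) HLc ltac:(lia)) as [ds [Hds Hdx]].
        exists ds. split; auto. intros db Hdb. destruct (Hds db Hdb) as [Hh [k [Hk Hck]]].
        split; auto. exists (S k). split; [lia|]. eapply chk_shift; eauto. }
    intros psi Hpsi. apply (Main (M - lev psi)%nat); auto.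
  - assert (A : forall l j b, L b -> lev b = (l + j)%nat -> chk n m d j (atLevel L l) b).
    { intros l j. induction j; intros b Hb Hlev.
      - cbn [chk]. split; auto. lia.
      - destruct (Hsub b Hb) as [H0 | [p [Hp Hc]]].
        + apply B0_lev in H0. lia.
        + cbn [chk]. exists p. split; auto. apply IHj; auto.
          destruct Hc as [_ [Hl _]]. lia. }
    intros l k Hk b [[Hb HnL] Hlev]. destruct k as [|k]; [lia|].
    destruct Hb as [H0 | [p [Hp Hc]]].
    + apply B0_lev in H0. lia.
    + cbn [chk]. exists p. split; auto. apply A; auto.
      destruct Hc as [_ [Hl _]]. lia.
Qed.
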